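(* Let $F$ be a compact metric space, $Y$ a normed space, and $S\colon F\to Y$ a continuous mapping. Then for every $n\in\mathbb{N}$, \[ \delta_n(S)\le 2\, e_n^{\mathrm{cont\text{-}non}}(S). \]
   Context: $e_n^{\mathrm{cont\text{-}non}}(S):=\inf\{\sup_{f\in F}\|S(f)-\Phi(N(f))\|_Y : N\colon F\to\mathbb{R}^n\text{ continuous},\ \Phi\colon\mathbb{R}^n\to Y\text{ arbitrary}\}$. The manifold widths are $\delta_n(S):=\inf\{\sup_{f\in F}\|S(f)-\Phi(N(f))\|_Y : N\colon F\to\mathbb{R}^n \text{ continuous},\ \Phi\colon\mathbb{R}^n\to Y\text{ continuous}\}$. *)

(* Defs.v *)
From HB Require Import structures.
From mathcomp Require Import all_boot all_order all_algebra.
From mathcomp Require Import all_classical all_reals all_analysis.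
Set Implicit Arguments. Unset Strict Implicit. Unset Printing Implicit Defensive.
Import Order.TTheory GRing.Theory Num.Theory.
Import numFieldNormedType.Exports.
Local Open Scope classical_set_scope.
Local Open Scope ring_scope.

Definition wc_err (R : realType) (F : pseudoMetricType R) (Y : normedModType R)
  (n : nat) (S : F -> Y) (N : F -> 'rV[R]_n) (Phi : 'rV[R]_n -> Y) : \bar R :=
  ereal_sup [set (`|S f - Phi (N f)|)%:E | f in [set: F]].

Definition e_cont_non (R : realType) (F : pseudoMetricType R) (Y : normedModType R)
  (S : F -> Y) (n : nat) : \bar R :=
  ereal_inf [set e | exists (N : F -> 'rV[R]_n) (Phi : 'rV[R]_n -> Y),
    continuous N /\ e = wc_err S N Phi].

Definition manifold_width (R : realType) (F : pseudoMetricType R) (Y : normedModType R)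
  (S : F -> Y) (n : nat) : \bar R :=
  ereal_inf [set e | exists (N : F -> 'rV[R]_n) (Phi : 'rV[R]_n -> Y),
    continuous N /\ continuous Phi /\ e = wc_err S N Phi].

(* Main.v *)
Require Import Defs.
From HB Require Import structures.
From mathcomp Require Import all_boot all_order all_algebra.
From mathcomp Require Import all_classical all_reals all_analysis.
From mathcomp Require Import lra.
Import Order.TTheory GRing.Theory Num.Theory.
Import numFieldNormedType.Exports.
Local Open Scope classical_set_scope.
Local Open Scope ring_scope.
Module Aux.
Set Implicit Arguments. Unset Strict Implicit.

Definition ptT (T : topologicalType) (x : T) : Type := T.
HB.instance Definition _ (T : topologicalType) (x : T) := Topological.copy (@ptT T x) T.
HB.instance Definition _ (T : topologicalType) (x : T) := isPointed.Build (@ptT T x) x.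
Lemma cc (T : topologicalType) (x : T) (A : set T) : compact A -> cover_compact A.
Proof. move=> cA. exact: (eq_ind _ (fun P => P A) cA _ (@compact_cover (@ptT T x))). Qed.

Lemma sum_cont (R : realType) (T : topologicalType) (W : normedModType R)
  (I : Type) (s : seq I) (g : I -> T -> W) :
  (forall i, continuous (g i)) -> continuous (fun y => \sum_(i <- s) g i y).
Proof.
move=> hg; elim: s => [|i s IH].
  by under eq_fun do rewrite big_nil; exact: cst_continuous.
under eq_fun do rewrite big_cons.
by move=> y; apply: continuousD; [exact: hg | exact: IH].
Qed.

Lemma sum_ge_term (R : realType) (I : eqType) (s : seq I) (g : I -> R) x :
  (forall i, 0 <= g i) -> x \in s -> g x <= \sum_(i <- s) g i.
Proof.
move=> hg; elim: s => [//|i s IH]; rewrite inE big_cons => /orP [/eqP ->|xs].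
  by rewrite lerDl sumr_ge0.
by rewrite (le_trans (IH xs)) // lerDr.
Qed.

Definition minfold (R : realType) (I : Type) (g : I -> R) (s : seq I) : R :=
  foldr (fun x acc => Num.min (g x) acc) 1 s.

Lemma minfold_gt0 (R : realType) (I : Type) (g : I -> R) (s : seq I) :
  (forall i, 0 < g i) -> 0 < minfold g s.
Proof.
move=> hg; elim: s => [|i s IH] /=; first exact: ltr01.
by rewrite lt_min hg IH.
Qed.

Lemma minfold_le (R : realType) (I : eqType) (g : I -> R) (s : seq I) x :
  x \in s -> minfold g s <= g x.
Proof.
elim: s => [//|i s IH]; rewrite inE /= => /orP [/eqP ->|xs].
  by rewrite ge_min lexx.
by rewrite ge_min (IH xs) orbT.
Qed.

Lemma local_del (R : realType) (F : pseudoMetricType R) (V Y : normedModType R)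
  (S : F -> Y) (N : F -> V) (d eps : R) :
  compact [set: F] -> continuous S -> continuous N -> 0 < eps ->
  (forall f f', N f = N f' -> `|S f - S f'| <= d) ->
  forall x, exists del : R, 0 < del /\
    forall f, `|N x - N f| < del -> `|S f - S x| < d + eps.
Proof.
move=> cF cS cN eps0 hfib x.
pose C := [set f | d + eps <= `|S f - S x|].
have Ccl : closed C.
  have -> : C = (fun f => `|S f - S x|) @^-1` [set r | d + eps <= r] by [].
  move: (@closed_ge R (d + eps)); apply: (proj1 (continuous_closedP _)).
  move=> y; apply: cvg_norm; apply: cvgB; [exact: cS | exact: cvg_cst].
have Cco : compact C := subclosed_compact Ccl cF (@subsetT _ _).
have NCco : compact (N @` C) := continuous_compact (@continuous_subspaceT _ _ C N cN) Cco.
have NCcl : closed (N @` C) := compact_closed (@norm_hausdorff _ V) NCco.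
have op : open (~` (N @` C)) by rewrite openC.
have nin : (~` (N @` C)) (N x).
  move=> [f Cf Nf]; have := hfib f x Nf; rewrite /C /= in Cf.
  by move=> h; have := le_trans Cf h; rewrite gerDl leNgt eps0.
have /nbhs_ballP [del del0 hb] : nbhs (N x) (~` (N @` C)).
  by move: op; rewrite openE => /(_ _ nin).
exists del; split => // f hf.
have : (~` (N @` C)) (N f).
  by apply: hb; rewrite -ball_normE /=.
move=> h; rewrite ltNge; apply/negP => hC; apply: h; by exists f.
Qed.

Lemma core (R : realType) (F : pseudoMetricType R) (V Y : normedModType R)
  (S : F -> Y) (N : F -> V) (d eps : R) :
  compact [set: F] -> continuous S -> continuous N -> 0 < eps ->
  (forall f f', N f = N f' -> `|S f - S f'| <= d) ->
  exists Psi : V -> Y, continuous Psi /\ forall f, `|S f - Psi (N f)| <= d + eps.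
Proof.
move=> cF cS cN eps0 hfib.
case: (pselect (exists x : F, True)) => [[x0 _]|nF]; last first.
  exists (fun=> 0); split; first exact: cst_continuous.
  by move=> f; exfalso; apply: nF; exists f.
have hP := local_del cF cS cN eps0 hfib.
pose del x := projT1 (cid (hP x)).
have del0 x : 0 < del x by case: (projT2 (cid (hP x))).

have delP x f : `|N x - N f| < del x -> `|S f - S x| < d + eps.
  by case: (projT2 (cid (hP x))) => _ h; exact: h.
pose U x := N @^-1` ball (N x) (del x / 2).
have Uop x : open (U x).
  by apply: open_comp; [move=> y _; exact: cN | exact: ball_open].
have cov : [set: F] `<=` cover [set: F] U.
  move=> x _; exists x => //; rewrite /U /=; apply: ballxx.
  by rewrite divr_gt0.
have [D _ covD] := cc x0 cF (fun i _ => Uop i) cov.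
pose s : seq F := finmap.enum_fset D.
have covs f : exists2 x, x \in s & `|N x - N f| < del x / 2.
  have [x Dx Ux] := covD f I; exists x => //.
  by move: Ux; rewrite /U /= -ball_normE.
pose c := minfold (fun x => del x / 2) s.
have c0 : 0 < c by apply: minfold_gt0 => i; rewrite divr_gt0.
pose w x (y : V) : R := Num.max 0 (del x - `|N x - y|).
pose W y := \sum_(x <- s) w x y.
pose G y := \sum_(x <- s) w x y *: S x.
have wc x : continuous (w x).
  move=> y; apply: (@continuous_max R V (fun=> 0) (fun y => del x - `|N x - y|) y).
    exact: cvg_cst.
  apply: cvgB; first exact: cvg_cst.
  by apply: cvg_norm; apply: cvgB; [exact: cvg_cst | exact: cvg_id].
have Wc : continuous W by apply: sum_cont.
have Gc : continuous G.
  apply: (@sum_cont R V Y F s (fun i y => w i y *: S i)) => i y.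
  apply: (@continuousZ R Y V (w i) (fun=> S i) y); [exact: wc | exact: cvg_cst].
exists (fun y => (Num.max (W y) c)^-1 *: G y); split.
  move=> y; apply: (@continuousZ R Y V (fun y => (Num.max (W y) c)^-1) G y); last exact: Gc.
  apply: cvgV.
    by rewrite gt_eqF // (lt_le_trans c0) // le_max lexx orbT.
  by apply: (@continuous_max R V W (fun=> c) y); [exact: Wc | exact: cvg_cst].
move=> f; set y := N f.
have [x1 xs hx] := covs f.
have w0 x z : 0 <= w x z by rewrite /w le_max lexx.
have Wge : c < W y.
  apply: (lt_le_trans _ (@sum_ge_term R F s (fun x => w x y) x1 (fun i => w0 i y) xs)).
  apply: (le_lt_trans (minfold_le (fun x => del x / 2) xs)).
  rewrite /w lt_max; apply/orP; right.
  have := del0 x1; move: hx; rewrite /y => hx hd; lra.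
have Wpos : 0 < W y := lt_trans c0 Wge.
rewrite (max_l (ltW Wge)).
have -> : S f - (W y)^-1 *: G y = (W y)^-1 *: \sum_(x <- s) w x y *: (S f - S x).
  rewrite -[in LHS](scale1r (S f)) -(mulVf (lt0r_neq0 Wpos)) -scalerA -scalerBr.
  congr (_ *: _); rewrite /W scaler_suml /G -sumrB; apply: eq_bigr => x _.
  by rewrite scalerBr.
have hb : `|\sum_(x <- s) w x y *: (S f - S x)| <= W y * (d + eps).
  apply: (le_trans (ler_norm_sum _ _ _)); rewrite /W mulr_suml.
  apply: ler_sum => x _; rewrite normrZ ger0_norm //.
  case: (ltP (`|N x - y|) (del x)) => h.
    by apply: ler_wpM2l => //; apply: ltW; apply: delP.
  have -> : w x y = 0 by rewrite /w max_l // subr_le0.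
  by rewrite !mul0r.
rewrite normrZ ger0_norm ?invr_ge0 ?(ltW Wpos) //.
have hi : 0 <= (W y)^-1 by rewrite invr_ge0 ltW.
apply: (le_trans (ler_wpM2l hi hb)).
by rewrite mulrA mulVf ?mul1r // lt0r_neq0.
Qed.
End Aux.
Import Aux.
Local Open Scope ereal_scope.

Theorem mainTheorem4 (R : realType) (F : pseudoMetricType R) (Y : normedModType R)
  (S : F -> Y) :
  hausdorff_space F -> compact [set: F] -> continuous S ->
  forall n : nat, manifold_width S n <= 2%:E * e_cont_non S n.
Proof.
move=> _ cF cS n.
case: (pselect (exists x : F, True)) => [[x0 _]|nF]; last first.
  have -> : manifold_width S n = -oo.
    apply/eqP; rewrite eq_le leNye andbT; apply: ereal_inf_lbound.
    exists (fun=> (0 : 'rV[R]_n)%R), (fun=> (0 : Y)%R); split; first exact: cst_continuous.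
    split; first exact: cst_continuous.
    rewrite /wc_err (_ : [set _ | f in [set: F]] = set0) ?ereal_sup0 //.
    by apply/seteqP; split => // z [f _ _]; apply: nF; exists f.
  by rewrite leNye.
have E0 : 0 <= e_cont_non S n.
  apply: le_ereal_inf_tmp => e [N [Phi [_ ->]]].
  apply: (le_trans _ (ereal_sup_ubound _)); last by exists x0.
  by rewrite lee_fin.
move: E0; case Eq: (e_cont_non S n) => [r| |] E0 //.
  2: by rewrite gt0_muley ?leey // lte_fin.
apply/lee_addgt0Pr => eps eps0.
have e3 : (0 < eps / 3)%R by rewrite divr_gt0.
have Efin : e_cont_non S n \is a fin_num by rewrite Eq.
have [w [N [Phi [cN ->]]] hw] : exists2 w,
    (fun e => exists (N : F -> 'rV[R]_n) (Phi : 'rV[R]_n -> Y),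
       continuous N /\ e = wc_err S N Phi) w & w < r%:E + (eps / 3)%:E.
  by rewrite -Eq; exact: (lb_ereal_inf_adherent e3 Efin).
pose e := (r + eps / 3)%R.
have hPhi f : (`|S f - Phi (N f)| <= e)%R.
  rewrite -lee_fin /e EFinD; apply: (le_trans _ (ltW hw)).
  by apply: ereal_sup_ubound; exists f.
have hfib f f' : N f = N f' -> (`|S f - S f'| <= e + e)%R.
  move=> Nff; have -> : (S f - S f' = (S f - Phi (N f)) - (S f' - Phi (N f')))%R.
    by rewrite Nff; rewrite opprB addrA subrK.
  by apply: (le_trans (ler_normB _ _)); apply: lerD.
have [Psi [cPsi hPsi]] := core cF cS cN e3 hfib.
apply: (le_trans (ereal_inf_lbound _)).
  by exists N, Psi; split => //; split => //; reflexivity.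
apply: ge_ereal_sup => z [f _ <-].
rewrite -EFinM -EFinD lee_fin; apply: (le_trans (hPsi f)); rewrite /e; lra.
Qed.
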